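(* Let $m, n_0, n_1$ be positive integers and $n(\lambda) = n_0 + n_1\lambda$. Let $x_0, y_0, z_0$ be positive rational numbers with $m/n_0 = 1/x_0 + 1/y_0 + 1/z_0$. Consider polynomials $x(\lambda), y(\lambda), z(\lambda)$ with rational coefficients and constant terms $x(0) = x_0$, $y(0) = y_0$, $z(0) = z_0$, such that $x$ and $z$ have degree $1$, $y$ has degree $2$, and $$\frac{m}{n(\lambda)} = \frac{1}{x(\lambda)} + \frac{1}{y(\lambda)} + \frac{1}{z(\lambda)}$$ holds identically in $\lambda$. Up to interchanging the roles of $x$ and $z$, there are exactly two such solutions, namely $$z_+(\lambda) = z_0 + \frac{n_1}{n_0}\frac{y_0 z_0}{y_0 + z_0}\lambda,\quad x_+(\lambda) = x_0 + x_0\frac{n_1}{n_0}\lambda,\quad y_+(\lambda) = y_0 + y_0\frac{n_1}{n_0}\Big(1 + \frac{y_0}{y_0+z_0}\Big)\lambda + \Big(y_0\frac{n_1}{n_0}\Big)^2\frac{1}{y_0+z_0}\lambda^2,$$ and $$z_-(\lambda) = z_0 + \frac{n_1}{m}\frac{x_0+z_0}{x_0}\lambda,\quad x_-(\lambda) = x_0 + \frac{n_1}{m}\frac{x_0+z_0}{z_0}\lambda,\quad y_-(\lambda) = y_0 + \Big(\frac{2 y_0 n_1}{n_0} - \frac{n_1}{m}\Big)\lambda + \frac{n_1}{n_0}\Big(\frac{y_0 n_1}{n_0} - \frac{n_1}{m}\Big)\lambda^2 .$$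
   Context: $\lambda$ is an indeterminate; the equation is an identity of rational functions in $\lambda$. *)

(* Defs.v *)
From HB Require Import structures.
From mathcomp Require Import all_boot all_order all_algebra.
From mathcomp Require Export fraction.
Set Implicit Arguments. Unset Strict Implicit. Unset Printing Implicit Defensive.
Import Order.TTheory GRing.Theory Num.Theory.
Local Open Scope ring_scope.

(* The rational function field Q(lambda); lambda is the polynomial variable 'X. *)
Notation ratfun := {fraction {poly rat}}.
Notation "x %:F" := (@FracField.tofrac _ x).

Definition npoly (n0 n1 : nat) : {poly rat} := (n0%:R)%:P + (n1%:R)%:P * 'X.

Definition is_solution (m n0 n1 : nat) (x0 y0 z0 : rat) (x y z : {poly rat}) : Prop :=
  [/\ size x = 2%N, size y = 3%N & size z = 2%N] /\
  [/\ x.[0] = x0, y.[0] = y0 & z.[0] = z0] /\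
  (m%:R : ratfun) / (npoly n0 n1)%:F = (x%:F)^-1 + (y%:F)^-1 + (z%:F)^-1.

Definition zplus (n0 n1 : nat) (y0 z0 : rat) : {poly rat} :=
  z0%:P + (n1%:R / n0%:R * (y0 * z0 / (y0 + z0)))%:P * 'X.
Definition xplus (n0 n1 : nat) (x0 : rat) : {poly rat} :=
  x0%:P + (x0 * (n1%:R / n0%:R))%:P * 'X.
Definition yplus (n0 n1 : nat) (y0 z0 : rat) : {poly rat} :=
  y0%:P + (y0 * (n1%:R / n0%:R) * (1 + y0 / (y0 + z0)))%:P * 'X
  + ((y0 * (n1%:R / n0%:R)) ^+ 2 / (y0 + z0))%:P * 'X ^+ 2.

Definition zminus (m n1 : nat) (x0 z0 : rat) : {poly rat} :=
  z0%:P + (n1%:R / m%:R * ((x0 + z0) / x0))%:P * 'X.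
Definition xminus (m n1 : nat) (x0 z0 : rat) : {poly rat} :=
  x0%:P + (n1%:R / m%:R * ((x0 + z0) / z0))%:P * 'X.
Definition yminus (m n0 n1 : nat) (y0 : rat) : {poly rat} :=
  y0%:P + (2 * y0 * n1%:R / n0%:R - n1%:R / m%:R)%:P * 'X
  + (n1%:R / n0%:R * (y0 * n1%:R / n0%:R - n1%:R / m%:R))%:P * 'X ^+ 2.

(* Main.v *)
Require Import Defs.
From HB Require Import structures.
From mathcomp Require Import all_boot all_order all_algebra ring lra.
Import Order.TTheory GRing.Theory Num.Theory.
Local Open Scope ring_scope.

Lemma poly2E (p : {poly rat}) : size p = 2%N -> p = (p`_0)%:P + (p`_1)%:P * 'X.
Proof.
move=> hs; apply/polyP => i.
rewrite coefD coefC coefCM coefX.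
case: i => [|[|i]] /=; rewrite ?mulr0 ?mulr1 ?addr0 ?add0r //.
by rewrite nth_default // hs.
Qed.

Lemma poly3E (p : {poly rat}) : size p = 3%N ->
  p = (p`_0)%:P + (p`_1)%:P * 'X + (p`_2)%:P * 'X ^+ 2.
Proof.
move=> hs; apply/polyP => i.
rewrite !coefD coefC !coefCM coefX coefXn.
case: i => [|[|[|i]]] /=; rewrite ?mulr0 ?mulr1 ?addr0 ?add0r //.
by rewrite nth_default // hs.
Qed.

Lemma size2 (a b : rat) : b != 0 -> size (a%:P + b%:P * 'X) = 2%N.
Proof.
move=> hb; rewrite addrC size_MXaddC polyC_eq0 (negbTE hb) /= size_polyC hb.
by [].
Qed.

Lemma size3 (a b c : rat) : c != 0 -> size (a%:P + b%:P * 'X + c%:P * 'X ^+ 2) = 3%N.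
Proof.
move=> hc.
have -> : a%:P + b%:P * 'X + c%:P * 'X ^+ 2 = (c%:P * 'X + b%:P) * 'X + a%:P by ring.
have hn : c%:P * 'X + b%:P != 0.
  by rewrite -size_poly_eq0 size_MXaddC polyC_eq0 (negbTE hc).
rewrite size_MXaddC (negbTE hn) /= size_MXaddC polyC_eq0 (negbTE hc) /= size_polyC hc.
by [].
Qed.

Lemma coef5 (c0 c1 c2 c3 c4 : rat) :
  c0%:P + c1%:P * 'X + c2%:P * 'X ^+ 2 + c3%:P * 'X ^+ 3 + c4%:P * 'X ^+ 4 = 0 ->
  [/\ c0 = 0, c1 = 0, c2 = 0, c3 = 0 & c4 = 0].
Proof.
move=> h.
have hc := fun i => congr1 (fun p : {poly rat} => p`_i) h.
have := hc 0%N; have := hc 1%N; have := hc 2%N; have := hc 3%N; have := hc 4%N.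
rewrite !coefD !coefC !coefCM !coefX !coefXn /= !(mulr0,mulr1,addr0,add0r).
by move=> -> -> -> -> ->.
Qed.

Lemma field_iff (F : fieldType) (m' N x y z : F) :
  x != 0 -> y != 0 -> z != 0 -> N != 0 ->
  (m' / N = x^-1 + y^-1 + z^-1) <-> (y * (m' * x * z - N * (x + z)) = N * x * z).
Proof.
move=> hx hy hz hN.
split=> h.
  have hm : m' = N * (x^-1 + y^-1 + z^-1).
    rewrite -h; field; exact: hN.
  by rewrite hm; field; rewrite hx hy hz.
have hD : m' * x * z - N * (x + z) != 0.
  have : N * x * z != 0 by rewrite !mulf_neq0.
  by rewrite -h mulf_eq0 negb_or => /andP [].
have hy2 : y = N * x * z / (m' * x * z - N * (x + z)).
  by rewrite -h; field; rewrite hD.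
by rewrite hy2; field; rewrite hx hz hN hD.
Qed.

Lemma ratfun_iff (m : nat) (x y z N : {poly rat}) :
  x != 0 -> y != 0 -> z != 0 -> N != 0 ->
  ((m%:R : ratfun) / N%:F = (x%:F)^-1 + (y%:F)^-1 + (z%:F)^-1) <->
  (y * ((m%:R : rat)%:P * x * z - N * (x + z)) = N * x * z).
Proof.
move=> hx hy hz hN.
have hx' : x%:F != 0 by rewrite tofrac_eq0.
have hy' : y%:F != 0 by rewrite tofrac_eq0.
have hz' : z%:F != 0 by rewrite tofrac_eq0.
have hN' : N%:F != 0 by rewrite tofrac_eq0.
rewrite (@field_iff _ _ _ _ _ _ hx' hy' hz' hN').
have hm : (m%:R : ratfun) = ((m%:R : rat)%:P)%:F by rewrite !rmorph_nat.
rewrite hm.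
split=> h.
  apply/eqP; rewrite -tofrac_eq; apply/eqP.
  by rewrite !tofracM tofracB !tofracM tofracD.
by move/(congr1 (@FracField.tofrac _)): h; rewrite !tofracM tofracB !tofracM tofracD.
Qed.

Definition D0 (M A B x0 y0 z0 a b c d : rat) := M * x0 * z0 - A * (x0 + z0).
Definition D1 (M A B x0 y0 z0 a b c d : rat) := M * (x0 * c + a * z0) - B * (x0 + z0) - A * (a + c).
Definition D2 (M A B x0 y0 z0 a b c d : rat) := M * a * c - B * (a + c).
Definition e0 (M A B x0 y0 z0 a b c d : rat) := y0 * (D0 M A B x0 y0 z0 a b c d) - A * (x0 * z0).
Definition e1 (M A B x0 y0 z0 a b c d : rat) := y0 * (D1 M A B x0 y0 z0 a b c d) + b * (D0 M A B x0 y0 z0 a b c d) - (A * (x0 * c + a * z0) + B * (x0 * z0)).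
Definition e2 (M A B x0 y0 z0 a b c d : rat) := y0 * (D2 M A B x0 y0 z0 a b c d) + b * (D1 M A B x0 y0 z0 a b c d) + d * (D0 M A B x0 y0 z0 a b c d) - (A * (a * c) + B * (x0 * c + a * z0)).
Definition e3 (M A B x0 y0 z0 a b c d : rat) := b * (D2 M A B x0 y0 z0 a b c d) + d * (D1 M A B x0 y0 z0 a b c d) - B * (a * c).
Definition e4 (M A B x0 y0 z0 a b c d : rat) := d * (D2 M A B x0 y0 z0 a b c d).

Lemma expand (M A B x0 y0 z0 a b c d : rat) :
  (y0%:P + b%:P * 'X + d%:P * 'X ^+ 2) *
   (M%:P * (x0%:P + a%:P * 'X) * (z0%:P + c%:P * 'X)
     - (A%:P + B%:P * 'X) * ((x0%:P + a%:P * 'X) + (z0%:P + c%:P * 'X)))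
  - (A%:P + B%:P * 'X) * (x0%:P + a%:P * 'X) * (z0%:P + c%:P * 'X) =
  (e0 M A B x0 y0 z0 a b c d)%:P + (e1 M A B x0 y0 z0 a b c d)%:P * 'X
  + (e2 M A B x0 y0 z0 a b c d)%:P * 'X ^+ 2 + (e3 M A B x0 y0 z0 a b c d)%:P * 'X ^+ 3
  + (e4 M A B x0 y0 z0 a b c d)%:P * 'X ^+ 4.
Proof.
rewrite /e0 /e1 /e2 /e3 /e4 /D0 /D1 /D2.
ring.
Qed.

Ltac nz := repeat (apply/andP; split); match goal with H : _ |- _ => exact: H end.

Lemma solve_lin (e k u v : rat) : e = 0 -> k != 0 -> e = k * (u - v) -> u = v.
Proof.
move=> -> hk /esym /eqP; rewrite mulf_eq0 (negbTE hk) /= subr_eq0.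
by move/eqP.
Qed.

Lemma L_plus (M A B x0 y0 z0 a b c d : rat) :
  0 < A -> 0 < B -> 0 < x0 -> 0 < y0 -> 0 < z0 ->
  M = A * (x0^-1 + y0^-1 + z0^-1) ->
  a = x0 * (B / A) ->
  A * D1 M A B x0 y0 z0 a b c d = B * D0 M A B x0 y0 z0 a b c d ->
  e1 M A B x0 y0 z0 a b c d = 0 -> e3 M A B x0 y0 z0 a b c d = 0 ->
  [/\ a = x0 * (B / A), c = B / A * (y0 * z0 / (y0 + z0)),
      b = y0 * (B / A) * (1 + y0 / (y0 + z0)) & d = (y0 * (B / A)) ^+ 2 / (y0 + z0)].
Proof.
move=> hA hB hx hy hz hM ha hAB he1 he3.
have hA0 : A != 0 by rewrite gt_eqF.
have hB0 : B != 0 by rewrite gt_eqF.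
have hx0 : x0 != 0 by rewrite gt_eqF.
have hy0 : y0 != 0 by rewrite gt_eqF.
have hz0 : z0 != 0 by rewrite gt_eqF.
have hyz : y0 + z0 != 0 by rewrite gt_eqF // addr_gt0.
have hc : c = B / A * (y0 * z0 / (y0 + z0)).
  have hk : A * (A * x0 * (y0 + z0) / (y0 * z0)) != 0.
    by rewrite mulf_neq0 // mulf_neq0 // ?invr_eq0 mulf_neq0 // mulf_neq0.
  have : A * D1 M A B x0 y0 z0 a b c d - B * D0 M A B x0 y0 z0 a b c d =
    A * (A * x0 * (y0 + z0) / (y0 * z0)) * (c - B / A * (y0 * z0 / (y0 + z0))).
    rewrite /D1 /D0 ha hM; field; nz.
  by apply: solve_lin; rewrite ?hAB ?subrr.
have hb : b = y0 * (B / A) * (1 + y0 / (y0 + z0)).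
  apply: (@solve_lin _ (A * x0 * z0 / y0) _ _ he1).
    by rewrite mulf_neq0 // ?invr_eq0 // mulf_neq0 // mulf_neq0.
  rewrite /e1 /D1 /D0 ha hc hM; field; nz.
split => //.
apply: (@solve_lin _ (B * x0 * z0 / y0) _ _ he3).
  by rewrite mulf_neq0 // ?invr_eq0 // mulf_neq0 // mulf_neq0.
rewrite /e3 /D2 /D1 /D0 ha hc hM; field; nz.
Qed.

Lemma L_swap (M A B x0 y0 z0 a b c d : rat) :
  0 < A -> 0 < B -> 0 < x0 -> 0 < y0 -> 0 < z0 ->
  M = A * (x0^-1 + y0^-1 + z0^-1) ->
  c = z0 * (B / A) ->
  A * D1 M A B x0 y0 z0 a b c d = B * D0 M A B x0 y0 z0 a b c d ->
  e1 M A B x0 y0 z0 a b c d = 0 -> e3 M A B x0 y0 z0 a b c d = 0 ->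
  [/\ a = B / A * (y0 * x0 / (y0 + x0)), c = z0 * (B / A),
      b = y0 * (B / A) * (1 + y0 / (y0 + x0)) & d = (y0 * (B / A)) ^+ 2 / (y0 + x0)].
Proof.
move=> hA hB hx hy hz hM hc hAB he1 he3.
have hA0 : A != 0 by rewrite gt_eqF.
have hB0 : B != 0 by rewrite gt_eqF.
have hx0 : x0 != 0 by rewrite gt_eqF.
have hy0 : y0 != 0 by rewrite gt_eqF.
have hz0 : z0 != 0 by rewrite gt_eqF.
have hyx : y0 + x0 != 0 by rewrite gt_eqF // addr_gt0.
have ha : a = B / A * (y0 * x0 / (y0 + x0)).
  have hk : A * (A * z0 * (y0 + x0) / (y0 * x0)) != 0.
    by rewrite mulf_neq0 // mulf_neq0 // ?invr_eq0 mulf_neq0 // mulf_neq0.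
  have : A * D1 M A B x0 y0 z0 a b c d - B * D0 M A B x0 y0 z0 a b c d =
    A * (A * z0 * (y0 + x0) / (y0 * x0)) * (a - B / A * (y0 * x0 / (y0 + x0))).
    rewrite /D1 /D0 hc hM; field; nz.
  by apply: solve_lin; rewrite ?hAB ?subrr.
have hb : b = y0 * (B / A) * (1 + y0 / (y0 + x0)).
  apply: (@solve_lin _ (A * x0 * z0 / y0) _ _ he1).
    by rewrite mulf_neq0 // ?invr_eq0 // mulf_neq0 // mulf_neq0.
  rewrite /e1 /D1 /D0 ha hc hM; field; nz.
split => //.
apply: (@solve_lin _ (B * x0 * z0 / y0) _ _ he3).
  by rewrite mulf_neq0 // ?invr_eq0 // mulf_neq0 // mulf_neq0.
rewrite /e3 /D2 /D1 /D0 ha hc hM; field; nz.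
Qed.

Lemma L_minus (M A B x0 y0 z0 a b c d : rat) :
  0 < A -> 0 < B -> 0 < x0 -> 0 < y0 -> 0 < z0 ->
  M = A * (x0^-1 + y0^-1 + z0^-1) ->
  z0 * a = c * x0 -> a != 0 ->
  D2 M A B x0 y0 z0 a b c d = 0 ->
  e1 M A B x0 y0 z0 a b c d = 0 -> e3 M A B x0 y0 z0 a b c d = 0 ->
  [/\ a = B / M * ((x0 + z0) / z0), c = B / M * ((x0 + z0) / x0),
      b = 2 * y0 * B / A - B / M & d = B / A * (y0 * B / A - B / M)].
Proof.
move=> hA hB hx hy hz hM hac ha0 hD2 he1 he3.
have hA0 : A != 0 by rewrite gt_eqF.
have hB0 : B != 0 by rewrite gt_eqF.
have hx0 : x0 != 0 by rewrite gt_eqF.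
have hy0 : y0 != 0 by rewrite gt_eqF.
have hz0 : z0 != 0 by rewrite gt_eqF.
have hxz : x0 + z0 != 0 by rewrite gt_eqF // addr_gt0.
have hMp : 0 < M by rewrite hM mulr_gt0 // !addr_gt0 // invr_gt0.
have hM0 : M != 0 by rewrite gt_eqF.
have hS : x0^-1 + y0^-1 + z0^-1 != 0 by rewrite gt_eqF // !addr_gt0 // invr_gt0.
have hP : (y0 + x0) * z0 + x0 * y0 != 0.
  by rewrite gt_eqF // addr_gt0 // mulr_gt0 // addr_gt0.
have hc' : c = z0 * a / x0.
  by rewrite hac; field; nz.
have ha : a = B / M * ((x0 + z0) / z0).
  apply: (@solve_lin (M * z0 * a - B * (x0 + z0)) (M * z0)).
  - apply/eqP; move/eqP: hD2; rewrite /D2 hc'.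
    have -> : M * a * (z0 * a / x0) - B * (a + z0 * a / x0) =
       (a / x0) * (M * z0 * a - B * (x0 + z0)) by field; nz.
    by rewrite !mulf_eq0 invr_eq0 (negbTE ha0) (negbTE hx0).
  - by rewrite mulf_neq0.
  - field; nz.
have hc : c = B / M * ((x0 + z0) / x0) by rewrite hc' ha; field; nz.
have hb : b = 2 * y0 * B / A - B / M.
  apply: (@solve_lin _ (A * x0 * z0 / y0) _ _ he1).
    by rewrite mulf_neq0 // ?invr_eq0 // mulf_neq0 // mulf_neq0.
  rewrite /e1 /D1 /D0 ha hc hM; field; nz.
split => //.
apply: (@solve_lin _ (B * (x0 + z0) * A / (M * y0)) _ _ he3).
  by rewrite mulf_neq0 // ?invr_eq0 // ?mulf_neq0.
rewrite /e3 /D2 /D1 /D0 ha hc hM; field; nz.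
Qed.

Lemma forward_alg (M A B x0 y0 z0 a b c d : rat) :
  0 < A -> 0 < B -> 0 < x0 -> 0 < y0 -> 0 < z0 ->
  M = A * (x0^-1 + y0^-1 + z0^-1) ->
  a != 0 -> c != 0 -> d != 0 ->
  e1 M A B x0 y0 z0 a b c d = 0 -> e2 M A B x0 y0 z0 a b c d = 0 ->
  e3 M A B x0 y0 z0 a b c d = 0 -> e4 M A B x0 y0 z0 a b c d = 0 ->
  [\/ [/\ a = x0 * (B / A), c = B / A * (y0 * z0 / (y0 + z0)),
      b = y0 * (B / A) * (1 + y0 / (y0 + z0)) & d = (y0 * (B / A)) ^+ 2 / (y0 + z0)],
      [/\ a = B / A * (y0 * x0 / (y0 + x0)), c = z0 * (B / A),
      b = y0 * (B / A) * (1 + y0 / (y0 + x0)) & d = (y0 * (B / A)) ^+ 2 / (y0 + x0)]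
    | [/\ a = B / M * ((x0 + z0) / z0), c = B / M * ((x0 + z0) / x0),
      b = 2 * y0 * B / A - B / M & d = B / A * (y0 * B / A - B / M)]].
Proof.
move=> hA hB hx hy hz hM ha0 hc0 hd0 he1 he2 he3 he4.
have hA0 : A != 0 by rewrite gt_eqF.
have hB0 : B != 0 by rewrite gt_eqF.
have hx0 : x0 != 0 by rewrite gt_eqF.
have hy0 : y0 != 0 by rewrite gt_eqF.
have hz0 : z0 != 0 by rewrite gt_eqF.
have hMp : 0 < M by rewrite hM mulr_gt0 // !addr_gt0 // invr_gt0.
have hM0 : M != 0 by rewrite gt_eqF.
set D0' := D0 M A B x0 y0 z0 a b c d.
set D1' := D1 M A B x0 y0 z0 a b c d.
set D2' := D2 M A B x0 y0 z0 a b c d.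
have he0 : e0 M A B x0 y0 z0 a b c d = 0.
  by rewrite /e0 /D0 hM; field; nz.
have hD0 : D0' != 0.
  have -> : D0' = A * x0 * z0 / y0 by rewrite /D0' /D0 hM; field; nz.
  by rewrite mulf_neq0 // ?invr_eq0 // !mulf_neq0.
have hD2 : D2' = 0.
  by move/eqP: he4; rewrite /e4 mulf_eq0 (negbTE hd0) /= => /eqP.
have hD1 : D1' != 0.
  apply/eqP => h1; move: he3; rewrite /e3 -/D1' -/D2' h1 hD2 !mulr0 add0r.
  by move/eqP; rewrite oppr_eq0 !mulf_eq0 (negbTE hB0) (negbTE ha0) (negbTE hc0).
set r := - D0' / D1'.
have key : (A + B * r) * (x0 + a * r) * (z0 + c * r) =
  (y0 + b * r + d * r ^+ 2) * (D0' + D1' * r + D2' * r ^+ 2)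
  - (e0 M A B x0 y0 z0 a b c d + e1 M A B x0 y0 z0 a b c d * r
     + e2 M A B x0 y0 z0 a b c d * r ^+ 2 + e3 M A B x0 y0 z0 a b c d * r ^+ 3
     + e4 M A B x0 y0 z0 a b c d * r ^+ 4).
  by rewrite /D0' /D1' /D2' /e0 /e1 /e2 /e3 /e4 /D0 /D1 /D2; ring.
have hr : D0' + D1' * r = 0 by rewrite /r; field; nz.
move: key; rewrite he0 he1 he2 he3 he4 hD2 hr !mul0r !addr0 mulr0.
move/eqP; rewrite !mulf_eq0 => /orP [/orP [hN|hX]|hZ].
-
  have hAB : A * D1' = B * D0'.
    apply/eqP; rewrite -subr_eq0; apply/eqP.
    have -> : A * D1' - B * D0' = (A + B * r) * D1' by rewrite /r; field; nz.
    by rewrite (eqP hN) mul0r.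
  have id2 : M * (B * x0 - A * a) * (B * z0 - A * c) =
     B * (B * D0') - B * (A * D1') + A ^+ 2 * D2'.
    by rewrite /D0' /D1' /D2' /D0 /D1 /D2; ring.
  move: id2; rewrite hD2 mulr0 addr0 hAB subrr.
  move/eqP; rewrite !mulf_eq0 (negbTE hM0) /= => /orP [h|h].
  + apply: Or31; apply: (@L_plus M) => //.
    move: h; rewrite subr_eq0 => /eqP h.
    by apply: (mulfI hA0); rewrite -h; field; nz.
  + apply: Or32; apply: (@L_swap M) => //.
    move: h; rewrite subr_eq0 => /eqP h.
    by apply: (mulfI hA0); rewrite -h; field; nz.
-
  have hxa : x0 * D1' = a * D0'.
    apply/eqP; rewrite -subr_eq0; apply/eqP.
    have -> : x0 * D1' - a * D0' = (x0 + a * r) * D1' by rewrite /r; field; nz.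
    by rewrite (eqP hX) mul0r.
  have id3 : - ((A * a - B * x0) * (z0 * a - c * x0)) =
     a * (a * D0') - a * (x0 * D1') + x0 ^+ 2 * D2'.
    by rewrite /D0' /D1' /D2' /D0 /D1 /D2; ring.
  move: id3; rewrite hD2 mulr0 addr0 hxa subrr.
  move/eqP; rewrite oppr_eq0 !mulf_eq0 => /orP [h|h].
  + move: h; rewrite subr_eq0 => /eqP h.
    have ha : a = x0 * (B / A) by apply: (mulfI hA0); rewrite h; field; nz.
    apply: Or31; apply: (@L_plus M) => //.
    apply: (mulfI hx0).
    have -> : x0 * (A * D1') = A * (x0 * D1') by ring.
    change (A * (x0 * D1') = x0 * (B * D0')); rewrite hxa; move: (D0') => t; rewrite ha; field; nz.
  + move: h; rewrite subr_eq0 => /eqP h.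
    by apply: Or33; apply: L_minus.
-
  have hzc : z0 * D1' = c * D0'.
    apply/eqP; rewrite -subr_eq0; apply/eqP.
    have -> : z0 * D1' - c * D0' = (z0 + c * r) * D1' by rewrite /r; field; nz.
    by rewrite (eqP hZ) mul0r.
  have id4 : - ((A * c - B * z0) * (x0 * c - a * z0)) =
     c * (c * D0') - c * (z0 * D1') + z0 ^+ 2 * D2'.
    by rewrite /D0' /D1' /D2' /D0 /D1 /D2; ring.
  move: id4; rewrite hD2 mulr0 addr0 hzc subrr.
  move/eqP; rewrite oppr_eq0 !mulf_eq0 => /orP [h|h].
  + move: h; rewrite subr_eq0 => /eqP h.
    have hc : c = z0 * (B / A) by apply: (mulfI hA0); rewrite h; field; nz.
    apply: Or32; apply: (@L_swap M) => //.
    apply: (mulfI hz0).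
    have -> : z0 * (A * D1') = A * (z0 * D1') by ring.
    change (A * (z0 * D1') = z0 * (B * D0')); rewrite hzc; move: (D0') => t; rewrite hc; field; nz.
  + move: h; rewrite subr_eq0 => /eqP h.
    by apply: Or33; apply: L_minus => //; rewrite mulrC -h mulrC.
Qed.

Lemma sol_iff (m n0 n1 : nat) (x0 y0 z0 a b c d : rat) :
  (0 < n1)%N -> a != 0 -> c != 0 -> d != 0 ->
  is_solution m n0 n1 x0 y0 z0 (x0%:P + a%:P * 'X) (y0%:P + b%:P * 'X + d%:P * 'X ^+ 2)
    (z0%:P + c%:P * 'X) <->
  let M := (m%:R : rat) in let A := (n0%:R : rat) in let B := (n1%:R : rat) in
  [/\ e0 M A B x0 y0 z0 a b c d = 0, e1 M A B x0 y0 z0 a b c d = 0,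
      e2 M A B x0 y0 z0 a b c d = 0, e3 M A B x0 y0 z0 a b c d = 0 &
      e4 M A B x0 y0 z0 a b c d = 0].
Proof.
move=> hn1 ha hc hd.
have hB : (n1%:R : rat) != 0 by rewrite pnatr_eq0 -lt0n.
have sx := @size2 x0 _ ha.
have sz := @size2 z0 _ hc.
have sy := @size3 y0 b _ hd.
have sN := @size2 (n0%:R : rat) _ hB.
have nz' : forall p : {poly rat}, size p = 2%N -> p != 0.
  by move=> p hp; rewrite -size_poly_eq0 hp.
have ny : y0%:P + b%:P * 'X + d%:P * 'X ^+ 2 != 0 by rewrite -size_poly_eq0 sy.
rewrite /is_solution.
have -> : (x0%:P + a%:P * 'X).[0] = x0 by rewrite !hornerE.
have -> : (z0%:P + c%:P * 'X).[0] = z0 by rewrite !hornerE.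
have -> : (y0%:P + b%:P * 'X + d%:P * 'X ^+ 2).[0] = y0.
  by rewrite horner_coef0 !coefD !coefC !coefCM coefX coefXn /= !mulr0 !addr0.
rewrite (@ratfun_iff m _ _ _ _ (nz' _ sx) ny (nz' _ sz) (nz' _ sN)).
rewrite /Defs.npoly.
set Y := y0%:P + b%:P * 'X + d%:P * 'X ^+ 2.
set X := x0%:P + a%:P * 'X.
set Z := z0%:P + c%:P * 'X.
set N := (n0%:R)%:P + (n1%:R)%:P * 'X.
have E := expand (m%:R) (n0%:R) (n1%:R) x0 y0 z0 a b c d.
rewrite -/Y -/X -/Z -/N in E.
split.
  move=> [_ [_ h]]; apply: coef5; rewrite -E h; exact: subrr.
move=> [h0 h1 h2 h3 h4]; split; first by split.
split; first by split.
apply/eqP; rewrite -subr_eq0 E h0 h1 h2 h3 h4.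
by rewrite !mul0r !addr0 polyC0.
Qed.

Lemma rev_alg (M A B x0 y0 z0 : rat) :
  0 < A -> 0 < B -> 0 < x0 -> 0 < y0 -> 0 < z0 ->
  M = A * (x0^-1 + y0^-1 + z0^-1) ->
  forall a b c d,
  [\/ [/\ a = x0 * (B / A), c = B / A * (y0 * z0 / (y0 + z0)),
      b = y0 * (B / A) * (1 + y0 / (y0 + z0)) & d = (y0 * (B / A)) ^+ 2 / (y0 + z0)],
      [/\ a = B / A * (y0 * x0 / (y0 + x0)), c = z0 * (B / A),
      b = y0 * (B / A) * (1 + y0 / (y0 + x0)) & d = (y0 * (B / A)) ^+ 2 / (y0 + x0)]
    | [/\ a = B / M * ((x0 + z0) / z0), c = B / M * ((x0 + z0) / x0),
      b = 2 * y0 * B / A - B / M & d = B / A * (y0 * B / A - B / M)]] ->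
  [/\ a != 0, c != 0, d != 0 &
  [/\ e0 M A B x0 y0 z0 a b c d = 0, e1 M A B x0 y0 z0 a b c d = 0,
      e2 M A B x0 y0 z0 a b c d = 0, e3 M A B x0 y0 z0 a b c d = 0 &
      e4 M A B x0 y0 z0 a b c d = 0]].
Proof.
move=> hA hB hx hy hz hM a b c d.
have hA0 : A != 0 by rewrite gt_eqF.
have hB0 : B != 0 by rewrite gt_eqF.
have hx0 : x0 != 0 by rewrite gt_eqF.
have hy0 : y0 != 0 by rewrite gt_eqF.
have hz0 : z0 != 0 by rewrite gt_eqF.
have hxz : x0 + z0 != 0 by rewrite gt_eqF // addr_gt0.
have hyz : y0 + z0 != 0 by rewrite gt_eqF // addr_gt0.
have hyx : y0 + x0 != 0 by rewrite gt_eqF // addr_gt0.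
have hMp : 0 < M by rewrite hM mulr_gt0 // !addr_gt0 // invr_gt0.
have hM0 : M != 0 by rewrite gt_eqF.
have hS : x0^-1 + y0^-1 + z0^-1 != 0 by rewrite gt_eqF // !addr_gt0 // invr_gt0.
have hP : (y0 + x0) * z0 + x0 * y0 != 0.
  by rewrite gt_eqF // addr_gt0 // mulr_gt0 // addr_gt0.
case=> [[-> -> -> ->]|[-> -> -> ->]|[-> -> -> ->]].
- split.
  + by rewrite !mulf_neq0 // invr_eq0.
  + by rewrite !mulf_neq0 // ?invr_eq0 // mulf_neq0.
  + by rewrite !mulf_neq0 // ?invr_eq0 // ?expf_neq0 // mulf_neq0 // invr_eq0.
  + by split; rewrite /e0 /e1 /e2 /e3 /e4 /D0 /D1 /D2 hM; field; nz.
- split.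
  + by rewrite !mulf_neq0 // ?invr_eq0 // mulf_neq0.
  + by rewrite !mulf_neq0 // invr_eq0.
  + by rewrite !mulf_neq0 // ?invr_eq0 // ?expf_neq0 // mulf_neq0 // invr_eq0.
  + by split; rewrite /e0 /e1 /e2 /e3 /e4 /D0 /D1 /D2 hM; field; nz.
- split.
  + by rewrite !mulf_neq0 // ?invr_eq0.
  + by rewrite !mulf_neq0 // ?invr_eq0.
  + rewrite !mulf_neq0 // ?invr_eq0 //.
    apply/eqP => h.
    have e1' : A * y0 * (x0^-1 + z0^-1) = (M * A / B) * (y0 * B / A - B / M).
      by rewrite hM; field; nz.
    rewrite h mulr0 in e1'.
    have : 0 < A * y0 * (x0^-1 + z0^-1).
      by rewrite !mulr_gt0 // addr_gt0 // invr_gt0.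
    by rewrite e1' ltxx.
  + by split; rewrite /e0 /e1 /e2 /e3 /e4 /D0 /D1 /D2 hM; field; nz.
Qed.

Lemma decomp2 (p : {poly rat}) (p0 : rat) : size p = 2%N -> p.[0] = p0 ->
  exists a, a != 0 /\ p = p0%:P + a%:P * 'X.
Proof.
move=> hs h0; exists p`_1; split.
  have : lead_coef p != 0 by rewrite lead_coef_eq0 -size_poly_eq0 hs.
  by rewrite lead_coefE hs.
by rewrite -h0 horner_coef0 -poly2E.
Qed.

Lemma decomp3 (p : {poly rat}) (p0 : rat) : size p = 3%N -> p.[0] = p0 ->
  exists b d, d != 0 /\ p = p0%:P + b%:P * 'X + d%:P * 'X ^+ 2.
Proof.
move=> hs h0; exists p`_1, p`_2; split.
  have : lead_coef p != 0 by rewrite lead_coef_eq0 -size_poly_eq0 hs.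
  by rewrite lead_coefE hs.
by rewrite -h0 horner_coef0 -poly3E.
Qed.

Theorem lemma6 (m n0 n1 : nat) (x0 y0 z0 : rat) :
  (0 < m)%N -> (0 < n0)%N -> (0 < n1)%N ->
  0 < x0 -> 0 < y0 -> 0 < z0 ->
  m%:R / n0%:R = x0^-1 + y0^-1 + z0^-1 ->
  forall x y z : {poly rat},
    is_solution m n0 n1 x0 y0 z0 x y z <->
    [\/ (x, y, z) = (xplus n0 n1 x0, yplus n0 n1 y0 z0, zplus n0 n1 y0 z0),
        (x, y, z) = (zplus n0 n1 y0 x0, yplus n0 n1 y0 x0, xplus n0 n1 z0)
      | (x, y, z) = (xminus m n1 x0 z0, yminus m n0 n1 y0, zminus m n1 x0 z0)].
Proof.
move=> hm hn0 hn1 hx hy hz H x y z.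
have hA : 0 < (n0%:R : rat) by rewrite ltr0n.
have hB : 0 < (n1%:R : rat) by rewrite ltr0n.
have hA0 : (n0%:R : rat) != 0 by rewrite gt_eqF.
have hM : (m%:R : rat) = n0%:R * (x0^-1 + y0^-1 + z0^-1).
  by rewrite -H; field; nz.
split.
- move=> hs'.
  have [[sx sy sz] [[hx0 hy0 hz0] _]] := hs'.
  have [a [ha ex]] := @decomp2 _ _ sx hx0.
  have [c [hc ez]] := @decomp2 _ _ sz hz0.
  have [b [d [hd ey]]] := @decomp3 _ _ sy hy0.
  subst x y z.
  have [h0 h1 h2 h3 h4] := (@sol_iff m n0 n1 x0 y0 z0 _ b _ _ hn1 ha hc hd).1 hs'.
  have := @forward_alg _ _ _ _ _ _ _ _ _ _ hA hB hx hy hz hM ha hc hd h1 h2 h3 h4.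
  case=> [[-> -> -> ->]|[-> -> -> ->]|[-> -> -> ->]].
  + by apply: Or31.
  + by apply: Or32.
  + by apply: Or33.
- have hmain : forall a b c d, 
    [\/ [/\ a = x0 * (n1%:R / n0%:R), c = n1%:R / n0%:R * (y0 * z0 / (y0 + z0)),
      b = y0 * (n1%:R / n0%:R) * (1 + y0 / (y0 + z0)) & d = (y0 * (n1%:R / n0%:R)) ^+ 2 / (y0 + z0)],
      [/\ a = n1%:R / n0%:R * (y0 * x0 / (y0 + x0)), c = z0 * (n1%:R / n0%:R),
      b = y0 * (n1%:R / n0%:R) * (1 + y0 / (y0 + x0)) & d = (y0 * (n1%:R / n0%:R)) ^+ 2 / (y0 + x0)]
    | [/\ a = n1%:R / m%:R * ((x0 + z0) / z0), c = n1%:R / m%:R * ((x0 + z0) / x0),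
      b = 2 * y0 * n1%:R / n0%:R - n1%:R / m%:R & d = n1%:R / n0%:R * (y0 * n1%:R / n0%:R - n1%:R / m%:R)]] ->
    is_solution m n0 n1 x0 y0 z0 (x0%:P + a%:P * 'X) (y0%:P + b%:P * 'X + d%:P * 'X ^+ 2)
    (z0%:P + c%:P * 'X).
    move=> a b c d hv.
    have [ha hc hd he] := @rev_alg _ _ _ _ _ _ hA hB hx hy hz hM _ _ _ _ hv.
    by apply/(@sol_iff m n0 n1 x0 y0 z0 _ b _ _ hn1 ha hc hd).
  case=> [[-> -> ->]|[-> -> ->]|[-> -> ->]].
  + by apply: hmain; apply: Or31.
  + by apply: hmain; apply: Or32.
  + by apply: hmain; apply: Or33.
Qed.
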